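(* Every Mayet-Godowski equation holds in every ortholattice that admits a strong set of states.
   Context: An ortholattice is a bounded lattice with an operation $'$ satisfying $a''=a$, $a\le b\Rightarrow b'\le a'$, $a\cap a'=0$ and $a\cup a'=1$. We write $a\perp b$ for $a\le b'$. A state on an ortholattice $L$ is a map $m:L\to[0,1]$ with $m(1)=1$ and $a\perp b\Rightarrow m(a\cup b)=m(a)+m(b)$. $L$ admits a strong set of states if there is a nonempty set $S$ of states such that for all $a,b\in L$ with $a\not\le b$ some $m\in S$ has $m(a)=1$ and $m(b)\ne1$. A Mayet-Godowski equation (MGE) is a conditional equality $$t_1\cap\cdots\cap t_n=u_1\cap\cdots\cap u_n,\qquad n\ge2,$$ where each $t_i=a_{i,1}\cup\cdots\cup a_{i,p_i}$ and each $u_i=b_{i,1}\cup\cdots\cup b_{i,q_i}$ is either a single variable or a join of two or more distinct variables. Two conditions are imposed: (1) as hypotheses, all variables occurring in the same term $t_i$ or $u_i$ are mutually orthogonal; (2) each variable occurs the same total number of times among the terms $t_1,\dots,t_n$ as among $u_1,\dots,u_n$. The MGE holds in $L$ if the equality is true for every assignment of elements of $L$ to the variables that satisfies all the orthogonality hypotheses in (1). *)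

(* Defs.v *)
From Stdlib Require Import Reals List Arith PeanoNat.
Import ListNotations.
Open Scope R_scope.

Record Ortholattice := {
  carrier :> Type;
  ole : carrier -> carrier -> Prop;
  ojoin : carrier -> carrier -> carrier;
  omeet : carrier -> carrier -> carrier;
  ocompl : carrier -> carrier;
  obot : carrier;
  otop : carrier;
  ole_refl : forall a, ole a a;
  ole_antisym : forall a b, ole a b -> ole b a -> a = b;
  ole_trans : forall a b c, ole a b -> ole b c -> ole a c;
  ojoin_ub_l : forall a b, ole a (ojoin a b);
  ojoin_ub_r : forall a b, ole b (ojoin a b);
  ojoin_lub : forall a b c, ole a c -> ole b c -> ole (ojoin a b) c;
  omeet_lb_l : forall a b, ole (omeet a b) a;
  omeet_lb_r : forall a b, ole (omeet a b) b;
  omeet_glb : forall a b c, ole c a -> ole c b -> ole c (omeet a b);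
  obot_least : forall a, ole obot a;
  otop_greatest : forall a, ole a otop;
  ocompl_invol : forall a, ocompl (ocompl a) = a;
  ocompl_antitone : forall a b, ole a b -> ole (ocompl b) (ocompl a);
  omeet_compl : forall a, omeet a (ocompl a) = obot;
  ojoin_compl : forall a, ojoin a (ocompl a) = otop
}.

Definition orth (L : Ortholattice) (a b : L) : Prop := ole L a (ocompl L b).

Definition is_state (L : Ortholattice) (m : L -> R) : Prop :=
  (forall a, 0 <= m a <= 1) /\
  m (otop L) = 1 /\
  (forall a b, orth L a b -> m (ojoin L a b) = m a + m b).

Definition admits_strong_set_of_states (L : Ortholattice) : Prop :=
  exists S : (L -> R) -> Prop,
    (exists m, S m) /\
    (forall m, S m -> is_state L m) /\
    (forall a b : L, ~ ole L a b ->
       exists m, S m /\ m a = 1 /\ m b <> 1).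

(* Mayet-Godowski equations.  Variables are natural numbers; a term is a
   list of variables (standing for their join); an MGE is given by the two
   lists of terms t_1..t_n and u_1..u_n. *)
Record MGE := { mge_lhs : list (list nat); mge_rhs : list (list nat) }.

Definition mge_wf (e : MGE) : Prop :=
  length (mge_lhs e) = length (mge_rhs e) /\
  (2 <= length (mge_lhs e))%nat /\
  (forall l, In l (mge_lhs e ++ mge_rhs e) -> l <> nil /\ NoDup l) /\
  (forall v : nat, count_occ Nat.eq_dec (concat (mge_lhs e)) v =
                   count_occ Nat.eq_dec (concat (mge_rhs e)) v).

Definition term_val (L : Ortholattice) (a : nat -> L) (l : list nat) : L :=
  fold_right (ojoin L) (obot L) (map a l).
Definition big_meet (L : Ortholattice) (xs : list L) : L :=
  fold_right (omeet L) (otop L) xs.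

Definition mge_holds (L : Ortholattice) (e : MGE) : Prop :=
  forall a : nat -> L,
    (forall l, In l (mge_lhs e ++ mge_rhs e) ->
       forall x y, In x l -> In y l -> x <> y -> orth L (a x) (a y)) ->
    big_meet L (map (term_val L a) (mge_lhs e)) =
    big_meet L (map (term_val L a) (mge_rhs e)).

(* Main.v *)
Require Import Defs.
From Stdlib Require Import Reals List Arith PeanoNat.
From Stdlib Require Import Lra Permutation Classical.
Import ListNotations.
Open Scope R_scope.

Definition sumR (l : list R) : R := fold_right Rplus 0 l.

Lemma sumR_app l1 l2 : sumR (l1 ++ l2) = sumR l1 + sumR l2.
Proof. induction l1; simpl; [lra| rewrite IHl1; lra]. Qed.

Lemma sumR_perm (l1 l2 : list R) : Permutation l1 l2 -> sumR l1 = sumR l2.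
Proof. induction 1; simpl; lra. Qed.

Section S.
Variable L : Ortholattice.
Variable m : L -> R.
Hypothesis Hm : is_state L m.

Lemma st_mono a b : ole L a b -> m a <= m b.
Proof.
  destruct Hm as [H01 [Htop Hadd]]. intro Hab.
  assert (H1 : orth L a (ocompl L b)) by (unfold orth; rewrite ocompl_invol; exact Hab).
  assert (H2 : orth L b (ocompl L b)) by (unfold orth; rewrite ocompl_invol; apply ole_refl).
  pose proof (Hadd _ _ H1). pose proof (Hadd _ _ H2).
  rewrite ojoin_compl, Htop in H0.
  pose proof (H01 (ojoin L a (ocompl L b))). lra.
Qed.

Lemma st_bot : m (obot L) = 0.
Proof.
  destruct Hm as [H01 [Htop Hadd]].
  assert (H : orth L (obot L) (obot L)) by apply obot_least.
  pose proof (Hadd _ _ H).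
  assert (E : ojoin L (obot L) (obot L) = obot L).
  { apply ole_antisym; [apply ojoin_lub; apply ole_refl | apply ojoin_ub_l]. }
  rewrite E in H0. lra.
Qed.

Lemma term_le (a : nat -> L) l c :
  (forall y, In y l -> ole L (a y) c) -> ole L (term_val L a l) c.
Proof.
  induction l; simpl; intros H.
  - apply obot_least.
  - apply ojoin_lub; auto.
Qed.

Lemma term_sum (a : nat -> L) l :
  NoDup l -> (forall x y, In x l -> In y l -> x <> y -> orth L (a x) (a y)) ->
  m (term_val L a l) = sumR (map (fun v => m (a v)) l).
Proof.
  induction l as [|x l IH]; intros Hnd Ho; simpl.
  - apply st_bot.
  - inversion Hnd; subst.
    destruct Hm as [_ [_ Hadd]].
    unfold term_val in *. simpl.
    rewrite Hadd.
    + rewrite IH; auto. intros; apply Ho; simpl; auto.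
    + unfold orth. rewrite <- (ocompl_invol L (a x)). apply ocompl_antitone.
      apply term_le. intros y Hy. apply Ho; simpl; auto.
      intro; subst; contradiction.
Qed.

Lemma terms_sum (a : nat -> L) T :
  (forall l, In l T -> NoDup l /\
     forall x y, In x l -> In y l -> x <> y -> orth L (a x) (a y)) ->
  sumR (map (fun l => m (term_val L a l)) T) = sumR (map (fun v => m (a v)) (concat T)).
Proof.
  induction T as [|l T IH]; intros H; simpl; auto.
  rewrite map_app, sumR_app, IH by (intros; apply H; simpl; auto).
  destruct (H l (or_introl eq_refl)). rewrite term_sum; auto.
Qed.
End S.

Lemma meet_le (L : Ortholattice) xs x : In x xs -> ole L (big_meet L xs) x.
Proof.
  induction xs; simpl; [tauto|]. intros [E|H].
  - subst. apply omeet_lb_l.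
  - eapply ole_trans; [apply omeet_lb_r | auto].
Qed.

Lemma meet_not (L : Ortholattice) p xs :
  ~ ole L p (big_meet L xs) -> exists x, In x xs /\ ~ ole L p x.
Proof.
  induction xs; simpl; intros H.
  - exfalso. apply H, otop_greatest.
  - destruct (classic (ole L p a)) as [Ha|Ha].
    + destruct IHxs as [x [Hx Hn]].
      * intro C. apply H. apply omeet_glb; auto.
      * exists x; auto.
    + exists a; auto.
Qed.

Lemma sum_ones l : (forall x, In x l -> x = 1) -> sumR l = INR (length l).
Proof.
  induction l; simpl; intros H; auto.
  rewrite IHl by auto. rewrite (H a) by auto. destruct (length l); simpl; lra.
Qed.

Lemma sum_lt l y : (forall x, In x l -> x <= 1) -> In y l -> y < 1 ->
  sumR l < INR (length l).
Proof.
  induction l; intros H Hy Hlt; [contradiction|].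
  change (length (a :: l)) with (S (length l)). rewrite S_INR. simpl in Hy |- *.
  destruct Hy as [E|Hy].
  - subst. assert (sumR l <= INR (length l)).
    { clear -H. induction l; [simpl; lra|].
      change (length (a :: l)) with (S (length l)). rewrite S_INR. simpl.
      assert (a <= 1) by (apply H; simpl; auto).
      assert (sumR l <= INR (length l)) by (apply IHl; intros; apply H; simpl; destruct H1; auto).
      lra. }
    lra.
  - assert (a <= 1) by (apply H; simpl; auto).
    assert (sumR l < INR (length l)) by (apply IHl; auto; intros; apply H; simpl; auto). lra.
Qed.

Lemma one_dir (L : Ortholattice) (HL : admits_strong_set_of_states L)
  (T U : list (list nat)) (a : nat -> L) :
  length T = length U ->
  (forall l, In l (T ++ U) -> l <> nil /\ NoDup l) ->
  (forall v : nat, count_occ Nat.eq_dec (concat T) v =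
                   count_occ Nat.eq_dec (concat U) v) ->
  (forall l, In l (T ++ U) ->
       forall x y, In x l -> In y l -> x <> y -> orth L (a x) (a y)) ->
  ole L (big_meet L (map (term_val L a) T)) (big_meet L (map (term_val L a) U)).
Proof.
  intros Hlen Hnd Hc Ho.
  apply NNPP. intro Hn.
  destruct (meet_not _ _ _ Hn) as [u [Hu Hnu]].
  destruct HL as [S [_ [HS Hstr]]].
  destruct (Hstr _ _ Hnu) as [m [Sm [Hp Hq]]].
  pose proof (HS _ Sm) as Hm.
  assert (Hperm : Permutation (concat T) (concat U)) by (apply (Permutation_count_occ Nat.eq_dec); exact Hc).
  assert (HT : forall l, In l T -> NoDup l /\
     forall x y, In x l -> In y l -> x <> y -> orth L (a x) (a y)).
  { intros l Hl. split; [apply Hnd; apply in_or_app; auto | apply Ho; apply in_or_app; auto]. }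
  assert (HU : forall l, In l U -> NoDup l /\
     forall x y, In x l -> In y l -> x <> y -> orth L (a x) (a y)).
  { intros l Hl. split; [apply Hnd; apply in_or_app; auto | apply Ho; apply in_or_app; auto]. }
  pose proof (terms_sum L m Hm a T HT) as E1.
  pose proof (terms_sum L m Hm a U HU) as E2.
  rewrite (sumR_perm _ _ (Permutation_map _ Hperm)) in E1.
  rewrite <- E2 in E1.
  rewrite sum_ones in E1.
  2:{ intros x Hx. apply in_map_iff in Hx. destruct Hx as [l [<- Hl]].
      destruct Hm as [H01 _]. pose proof (H01 (term_val L a l)).
      assert (m (big_meet L (map (term_val L a) T)) <= m (term_val L a l)).
      { apply st_mono; auto. apply meet_le. apply in_map; auto. }
      lra. }
  apply in_map_iff in Hu. destruct Hu as [lu [Elu Hlu]].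
  assert (Hlt : sumR (map (fun l => m (term_val L a l)) U) <
           INR (length (map (fun l => m (term_val L a l)) U))).
  { apply (sum_lt _ (m u)).
    - intros x Hx. apply in_map_iff in Hx. destruct Hx as [l [<- Hl]].
      destruct Hm as [H01 _]. apply H01.
    - apply in_map_iff. exists lu; subst; auto.
    - destruct Hm as [H01 _]. pose proof (H01 u). lra. }
  rewrite !length_map, Hlen in *. lra.
Qed.

Theorem theorem6p4 :
  forall (L : Ortholattice), admits_strong_set_of_states L ->
  forall (e : MGE), mge_wf e -> mge_holds L e.
Proof.
  intros L HL e [Hlen [_ [Hnd Hc]]] a Ho.
  apply ole_antisym.
  - apply one_dir; auto.
  - apply one_dir; auto.
    + intros l Hl. apply Hnd. apply in_app_or in Hl. apply in_or_app. tauto.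
    + intros l Hl. apply Ho. apply in_app_or in Hl. apply in_or_app. tauto.
Qed.
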